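(* There is an absolute constant $c>0$ such that the following holds. Let $G=K_n$ with $n\ge 2$, let $F$ be a regular distribution, and let $p=F^{-1}(1-1/n)\cdot(1-1/n)^{n-1}$. Then $$\inf_{\mathbf{T}\in\mathcal{N}_{p\cdot\mathbf{1}}}\mathcal{R}(p\cdot\mathbf{1},\mathbf{T})\ \ge\ c\cdot\sup_{\mathbf{p}'\in(0,\infty)^n}\ \sup_{\mathbf{T}\in\mathcal{N}_{\mathbf{p}'}}\mathcal{R}(\mathbf{p}',\mathbf{T}),$$ i.e. the worst equilibrium revenue at the uniform price $p$ is a constant fraction of the best equilibrium revenue over all (possibly non-uniform) price vectors.
   Context: Public-goods pricing game: $n$ buyers are the vertices of an undirected graph $G=([n],E)$, here the complete graph $K_n$; $N(i)=\{j:(i,j)\in E\}$ (so $i\notin N(i)$). Values $v_i$ are i.i.d. with cumulative distribution function $F$ on $[0,\infty)$, $F(\infty)=1$. An equilibrium for price vector $\mathbf{p}$ is a threshold vector $\mathbf{T}\in[0,\infty]^n$ (buyer $i$ purchases iff $v_i\ge T_i$) with $T_i=p_i/\prod_{j\in N(i)}F(T_j)$ for all $i$ (convention $c/0=\infty$); $\mathcal{N}_{\mathbf{p}}$ is the set of equilibria; $\mathcal{R}(\mathbf{p},\mathbf{T})=\sum_ip_i(1-F(T_i))$; $p\cdot\mathbf{1}$ is the uniform price vector. $F$ is regular: it is atomless, supported on an interval in $[0,\infty)$ with a density $f$ positive there, and the virtual value $\phi(x)=x-\frac{1-F(x)}{f(x)}$ is non-decreasing. $F^{-1}(q)=\min\{x: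 F(x)=q\}$. *)

(* Defs.v *)
From Stdlib Require Import Reals Lra List.
Import ListNotations.
Open Scope R_scope.

(* Extended non-negative thresholds: [0, infinity]. *)
Inductive ext : Type := Fin (x : R) | Inf.

Definition Fe (F : R -> R) (t : ext) : R :=
  match t with Fin x => F x | Inf => 1 end.

Definition is_cdf_nonneg (F : R -> R) : Prop :=
  (forall x y, x <= y -> F x <= F y) /\
  (forall x, 0 <= F x <= 1) /\
  (forall x, x < 0 -> F x = 0) /\
  (forall eps, 0 < eps -> exists M, forall x, M <= x -> 1 - eps < F x).

(* Regular distribution: atomless (continuous CDF), supported on an interval
   of [0,inf) (the interior of which is {x | 0 < F x < 1}) with a density f
   positive there, and virtual value x - (1 - F x)/f x non-decreasing. *)
Definition virtual_value (F f : R -> R) (x : R) : R := x - (1 - F x) / f x.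

Definition regular (F : R -> R) : Prop :=
  is_cdf_nonneg F /\
  continuity F /\
  exists f : R -> R,
    (forall x, 0 < F x < 1 -> derivable_pt_lim F x (f x) /\ 0 < f x) /\
    (forall x y, 0 < F x < 1 -> 0 < F y < 1 -> x <= y ->
        virtual_value F f x <= virtual_value F f y).

Definition is_Finv (F : R -> R) (q x0 : R) : Prop :=
  F x0 = q /\ forall x, F x = q -> x0 <= x.

(* Buyers are 0..n-1; the graph is the complete graph K_n, so
   N(i) = {j < n | j <> i}. *)
Definition neighbors (n i : nat) : list nat :=
  filter (fun j => negb (Nat.eqb j i)) (seq 0 n).

Definition prod_list (l : list R) : R := fold_right Rmult 1 l.
Definition sum_list (l : list R) : R := fold_right Rplus 0 l.

(* T is an equilibrium for prices p: T_i = p_i / prod_{j in N(i)} F(T_j),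
   with convention c/0 = infinity. *)
Definition is_equilibrium (F : R -> R) (n : nat) (p : nat -> R) (T : nat -> ext)
  : Prop :=
  forall i, (i < n)%nat ->
    let P := prod_list (map (fun j => Fe F (T j)) (neighbors n i)) in
    (P = 0 -> T i = Inf) /\ (P <> 0 -> T i = Fin (p i / P)).

Definition revenue (F : R -> R) (n : nat) (p : nat -> R) (T : nat -> ext) : R :=
  sum_list (map (fun i => p i * (1 - Fe F (T i))) (seq 0 n)).

(* Main.v *)
Require Import Defs.
From Stdlib Require Import Reals Lra List Classical.
Open Scope R_scope.
From Stdlib Require Import Arith Lia.

Lemma K_deriv (F : R -> R) (c u d : R) :
  derivable_pt_lim F u d ->
  derivable_pt_lim (fun v => v * (1 - F v) + c * F v) u ((1 - F u) - u * d + c * d).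
Proof.
  intro HF.
  assert (H1 : derivable_pt_lim (fun v => 1 - F v) u (0 - d)).
  { apply (derivable_pt_lim_minus (fct_cte 1) F); auto. apply derivable_pt_lim_const. }
  assert (H2 := derivable_pt_lim_mult id (fun v => 1 - F v) u 1 (0 - d) (derivable_pt_lim_id u) H1).
  assert (H3 := derivable_pt_lim_scal F c u d HF).
  assert (H4 := derivable_pt_lim_plus _ _ u _ _ H2 H3).
  unfold mult_fct, plus_fct, mult_real_fct, id in H4.
  replace ((1 - F u) - u * d + c * d) with (1 * (1 - F u) + u * (0 - d) + c * d) by ring.
  exact H4.
Qed.

Lemma F0 (F : R -> R) : continuity F -> (forall x, x < 0 -> F x = 0) ->
  (forall x, 0 <= F x <= 1) -> F 0 = 0.
Proof.
  intros Hc Hn H01.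
  destruct (Req_dec (F 0) 0) as [e|ne]; auto. exfalso.
  assert (pos : 0 < F 0) by (destruct (H01 0); lra).
  destruct (Hc 0 (F 0 / 2)) as [al [Hal Hx]]; [lra|].
  assert (hd : R_dist (- (al/2)) 0 < al).
  { unfold R_dist. replace (- (al/2) - 0) with (- (al/2)) by ring. rewrite Rabs_Ropp, Rabs_right; lra. }
  assert (hne : 0 <> - (al/2)) by lra.
  assert (h := Hx (- (al/2)) (conj (conj I hne) hd)).
  rewrite (Hn (-(al/2))) in h by lra. simpl in h. unfold Rdist in h.
  rewrite Rabs_minus_sym in h. replace (F 0 - 0) with (F 0) in h by ring. rewrite Rabs_right in h; lra.
Qed.

Lemma key (F : R -> R) (q q0 t : R) :
  regular F -> 1/2 <= q < 1 -> is_Finv F q q0 -> q <= F t ->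
  t * (1 - F t) <= 2 * q0 * (1 - q).
Proof.
  intros [[Hmono [H01 [Hneg Hlim]]] [Hcont [f [Hder Hvv]]]] Hq [Hq0 Hmin] Ht.
  assert (HF0 := F0 F Hcont Hneg H01).
  assert (q0pos : 0 < q0).
  { destruct (Rle_lt_dec q0 0) as [h|h]; auto.
    destruct (Rle_lt_or_eq_dec _ _ h) as [h'|h'].
    - rewrite (Hneg q0 h') in Hq0; lra.
    - subst q0. lra. }
  destruct (Req_dec (F t) 1) as [e1|n1].
  { rewrite e1. nra. }
  assert (Ft1 : F t < 1) by (destruct (H01 t); lra).
  assert (tq0 : q0 <= t).
  { destruct (Rle_lt_dec q0 t) as [h|h]; auto.
    assert (F t <= q) by (rewrite <- Hq0; apply Hmono; lra).
    apply Hmin; lra. }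
  set (lam := q0 * (1 - q) / q).
  assert (lam0 : 0 <= lam) by (unfold lam; apply Rmult_le_pos; [nra| left; apply Rinv_0_lt_compat; lra]).
  assert (Iq0 : 0 < F q0 < 1) by lra.
  set (phi := virtual_value F f).
  assert (SA : - lam <= phi q0).
  { destruct (Rle_lt_dec (- lam) (phi q0)) as [h|h]; auto. exfalso.
    set (dl := - (phi q0 + lam)).
    assert (dl0 : 0 < dl) by (unfold dl; lra).
    set (y := dl * q / (2 * (lam + dl))).
    assert (y0 : 0 < y) by (unfold y; apply Rdiv_lt_0_compat; nra).
    assert (yq : y * (2 * (lam + dl)) = dl * q) by (unfold y; field; lra).
    assert (yq2 : y <= q / 2) by nra.
    destruct (IVT (fun v => F v - y) (-1) q0) as [a [[Ha1 Ha2] Ha]].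
    { intro x. apply continuity_pt_minus; [apply Hcont | apply continuity_pt_const; intros u v; reflexivity]. }
    { lra. }
    { rewrite Hneg by lra. lra. }
    { lra. }
    simpl in Ha.
    assert (Fa : F a = y) by lra.
    assert (a0 : 0 <= a) by (destruct (Rle_lt_dec 0 a) as [h'|h']; auto; rewrite Hneg in Fa; lra).
    assert (aq0 : a < q0) by (destruct (Rle_lt_or_eq_dec _ _ Ha2) as [h'|h']; auto; subst a; lra).
    set (c := phi q0).
    destruct (MVT_cor2 (fun v => v * (1 - F v) + c * F v)
                (fun u => (1 - F u) - u * f u + c * f u) a q0 aq0) as [xi [Hxi [xi1 xi2]]].
    { intros u [u1 u2]. apply K_deriv. apply Hder.
      split.
      - apply Rlt_le_trans with (F a); [lra| apply Hmono; lra].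
      - apply Rle_lt_trans with (F q0); [apply Hmono; lra| lra]. }
    assert (Ixi : 0 < F xi < 1).
    { split.
      - apply Rlt_le_trans with (F a); [lra| apply Hmono; lra].
      - apply Rle_lt_trans with (F q0); [apply Hmono; lra| lra]. }
    destruct (Hder xi Ixi) as [_ fpos].
    assert (Hp : phi xi <= c) by (unfold phi, c; apply Hvv; [exact Ixi| exact Iq0| lra]).
    assert (ed : (1 - F xi) - xi * f xi + c * f xi = f xi * (c - phi xi)).
    { unfold phi, virtual_value. field. lra. }
    rewrite ed in Hxi.
    assert (0 <= f xi * (c - phi xi) * (q0 - a)).
    { apply Rmult_le_pos; [apply Rmult_le_pos|]; lra. }
    rewrite Hq0, Fa in Hxi.
    assert (c = - lam - dl) by (unfold dl, c; lra).
    assert (q0 * (1 - q) = lam * q) by (unfold lam; field; lra).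
    nra. }
  set (c := - lam).
  destruct (Rle_lt_or_eq_dec _ _ tq0) as [tl|te].
  2:{ subst t. rewrite Hq0. nra. }
  destruct (MVT_cor2 (fun v => v * (1 - F v) + c * F v)
                (fun u => (1 - F u) - u * f u + c * f u) q0 t tl) as [xi [Hxi [xi1 xi2]]].
  { intros u [u1 u2]. apply K_deriv. apply Hder.
    split.
    - apply Rlt_le_trans with (F q0); [lra| apply Hmono; lra].
    - apply Rle_lt_trans with (F t); [apply Hmono; lra| lra]. }
  assert (Ixi : 0 < F xi < 1).
  { split.
    - apply Rlt_le_trans with (F q0); [lra| apply Hmono; lra].
    - apply Rle_lt_trans with (F t); [apply Hmono; lra| lra]. }
  destruct (Hder xi Ixi) as [_ fpos].
  assert (Hp : phi q0 <= phi xi) by (apply Hvv; lra).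
  assert (ed : (1 - F xi) - xi * f xi + c * f xi = f xi * (c - phi xi)).
  { unfold phi, virtual_value. field. lra. }
  rewrite ed in Hxi.
  assert (f xi * (phi xi - c) * (t - q0) >= 0).
  { apply Rle_ge. apply Rmult_le_pos; [apply Rmult_le_pos|]; unfold c; lra. }
  rewrite Hq0 in Hxi.
  assert (q0 * (1 - q) = lam * q) by (unfold lam; field; lra).
  assert (t * (1 - F t) <= lam * F t) by (unfold c in *; nra).
  assert (lam * F t <= lam) by nra.
  assert (lam <= 2 * q0 * (1 - q)).
  { assert (0 <= q0 * (1 - q)) by nra. assert (0 <= q0 * (1 - q) * (2*q - 1)) by (apply Rmult_le_pos; lra). assert (lam * q <= 2 * q0 * (1 - q) * q) by nra. apply Rmult_le_reg_r with q; lra. }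
  lra.
Qed.

Lemma prod_bounds (x : nat -> R) l : (forall i, 0 <= x i <= 1) ->
  0 <= prod_list (map x l) <= 1.
Proof.
  intro H. induction l as [|a l IH]; simpl; [lra|].
  destruct (H a). destruct IH. split; nra.
Qed.

Lemma sum_le (g h : nat -> R) l : (forall i, In i l -> g i <= h i) ->
  sum_list (map g l) <= sum_list (map h l).
Proof.
  induction l as [|a l IH]; simpl; intros H; [lra|].
  assert (g a <= h a) by auto. assert (sum_list (map g l) <= sum_list (map h l)) by auto. lra.
Qed.

Lemma sum_lin (g : nat -> R) a b l :
  sum_list (map (fun i => a * g i + b) l) = a * sum_list (map g l) + b * INR (length l).
Proof.
  induction l as [|c l IH]; [simpl; ring|]. unfold sum_list in *. cbn [map fold_right length]. rewrite IH, S_INR. ring.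
Qed.

Lemma sum_scal (g : nat -> R) a l :
  sum_list (map (fun i => a * g i) l) = a * sum_list (map g l).
Proof. induction l as [|c l IH]; simpl; [ring|]. rewrite IH. ring. Qed.

Lemma sum_nonneg (g : nat -> R) l : (forall i, 0 <= g i) -> 0 <= sum_list (map g l).
Proof. intro H. induction l; simpl; [lra|]. specialize (H a). lra. Qed.

Lemma sum_filter_le (g : nat -> R) h l : (forall i, 0 <= g i) ->
  sum_list (map g (filter h l)) <= sum_list (map g l).
Proof.
  intro H. induction l as [|a l IH]; simpl; [lra|].
  destruct (h a); simpl; specialize (H a); lra.
Qed.

Lemma filter_notin a l : ~ In a l -> filter (fun j => negb (Nat.eqb j a)) l = l.
Proof.
  induction l as [|b l IH]; simpl; intros H; auto.
  destruct (Nat.eqb_spec b a); [exfalso; auto|]. simpl. f_equal. auto.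
Qed.

Lemma f_lemma (x : nat -> R) l : NoDup l -> (forall i, 0 <= x i <= 1) ->
  sum_list (map (fun i => (1 - x i) * prod_list (map x (filter (fun j => negb (Nat.eqb j i)) l))) l)
  + prod_list (map x l) <= 1.
Proof.
  intros ND H. induction ND as [|a l Hna ND IH]; simpl; [lra|].
  rewrite Nat.eqb_refl. simpl. rewrite filter_notin by auto.
  assert (E : map (fun i => (1 - x i) * prod_list (map x (if negb (Nat.eqb a i) then a :: filter (fun j => negb (Nat.eqb j i)) l else filter (fun j => negb (Nat.eqb j i)) l))) l
     = map (fun i => x a * ((1 - x i) * prod_list (map x (filter (fun j => negb (Nat.eqb j i)) l)))) l).
  { apply map_ext_in. intros i Hi. destruct (Nat.eqb_spec a i) as [e|ne]; [subst; contradiction|]. unfold prod_list; simpl. ring. }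
  change (sum_list (map (fun i => (1 - x i) * prod_list (map x (if negb (Nat.eqb a i) then a :: filter (fun j => negb (Nat.eqb j i)) l else filter (fun j => negb (Nat.eqb j i)) l))) l)) with (sum_list (map (fun i => (1 - x i) * prod_list (map x (filter (fun j => negb (Nat.eqb j i)) (a :: l)))) l)) in E. rewrite E.
  rewrite sum_scal.
  destruct (H a). destruct (prod_bounds x l H).
  nra.
Qed.

Lemma prod_ge (x : nat -> R) l : (forall i, 0 <= x i <= 1) ->
  1 - sum_list (map (fun i => 1 - x i) l) <= prod_list (map x l).
Proof.
  intro H. induction l as [|a l IH]; simpl; [lra|].
  destruct (H a). assert (0 <= sum_list (map (fun i => 1 - x i) l)).
  { apply sum_nonneg. intro i; destruct (H i); lra. }
  nra.
Qed.

Lemma pow_le_exp x k : -1 <= x -> (1 + x) ^ k <= exp (INR k * x).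
Proof.
  intro Hx. induction k as [|k IH].
  - simpl. rewrite Rmult_0_l, exp_0. lra.
  - rewrite S_INR. change ((1+x)^(S k)) with ((1+x)*(1+x)^k). replace ((INR k + 1) * x) with (x + INR k * x) by ring.
    rewrite exp_plus.
    assert (h1 : 1 + x <= exp x).
    { destruct (Req_dec x 0) as [e|ne]; [subst; rewrite exp_0; lra| left; apply exp_ineq1; auto]. }
    assert (0 <= (1 + x) ^ k) by (apply pow_le; lra).
    apply Rmult_le_compat; lra.
Qed.

Lemma sum_const (b : R) l : sum_list (map (fun _ : nat => b) l) = b * INR (length l).
Proof.
  induction l as [|c l IH]; [simpl; ring|]. unfold sum_list in *. cbn [map fold_right length]. rewrite IH, S_INR. ring.
Qed.

Lemma sum_ge_elem (g : nat -> R) l j : (forall i, 0 <= g i) -> In j l -> g j <= sum_list (map g l).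
Proof.
  intros H Hj. induction l as [|a l IH]; simpl in *; [contradiction|].
  destruct Hj as [e|Hj].
  - subst. assert (0 <= sum_list (map g l)) by (apply sum_nonneg; auto). lra.
  - specialize (IH Hj). specialize (H a). lra.
Qed.

Lemma prod_pos (x : nat -> R) l : (forall j, In j l -> 0 < x j) -> 0 < prod_list (map x l).
Proof.
  induction l as [|a l IH]; simpl; intros H; [lra|].
  apply Rmult_lt_0_compat; auto.
Qed.

Lemma Fe_bounds F t : (forall x, 0 <= F x <= 1) -> 0 <= Fe F t <= 1.
Proof. intro H. destruct t; simpl; auto; lra. Qed.

Lemma q0_pos F q q0 : regular F -> 0 < q -> is_Finv F q q0 -> 0 < q0.
Proof.
  intros [[Hmono [H01 [Hneg Hlim]]] [Hcont _]] Hq [Hq0 Hmin].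
  assert (HF0 := F0 F Hcont Hneg H01).
  destruct (Rle_lt_dec q0 0) as [h|h]; auto.
  destruct (Rle_lt_or_eq_dec _ _ h) as [h'|h'].
  - rewrite (Hneg q0 h') in Hq0; lra.
  - subst q0. lra.
Qed.

Theorem theorem3p1 :
  exists c : R, 0 < c /\
  forall (n : nat) (F : R -> R) (q0 : R),
    (2 <= n)%nat ->
    regular F ->
    is_Finv F (1 - 1 / INR n) q0 ->
    let p := q0 * (1 - 1 / INR n) ^ (n - 1) in
    forall T : nat -> ext,
      is_equilibrium F n (fun _ => p) T ->
      forall (p' : nat -> R) (T' : nat -> ext),
        (forall i, (i < n)%nat -> 0 < p' i) ->
        is_equilibrium F n p' T' ->
        c * revenue F n p' T' <= revenue F n (fun _ => p) T.
Proof.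
  exists (1/27). split; [lra|].
  intros n F q0 Hn Hreg HFinv p T HT p' T' Hp' HT'.
  set (q := 1 - 1 / INR n) in *.
  assert (Hn2 : 2 <= INR n) by (replace 2 with (INR 2) by (simpl; ring); apply le_INR; auto).
  assert (Hnq : INR n * (1 - q) = 1) by (unfold q; field; lra).
  assert (Hq : 1/2 <= q < 1).
  { unfold q. split.
    - assert (1 / INR n <= 1/2) by (apply Rmult_le_reg_r with (INR n); [lra|]; field_simplify; lra). lra.
    - assert (0 < 1 / INR n) by (apply Rdiv_lt_0_compat; lra). lra. }
  assert (q0p : 0 < q0) by (apply (q0_pos F q); auto; lra).
  pose proof Hreg as [[Hmono [H01 [Hneg Hlim]]] _].
  destruct HFinv as [Hq0 Hmin].
  assert (Flt : forall t, F t < q -> t < q0).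
  { intros t Ht. destruct (Rlt_le_dec t q0) as [h|h]; auto.
    assert (F q0 <= F t) by (apply Hmono; auto). lra. }
  assert (UB : revenue F n p' T' <= 3 * q0).
  { set (x := fun j => Fe F (T' j)).
    assert (xb : forall j, 0 <= x j <= 1) by (intro j; apply Fe_bounds; auto).
    unfold revenue.
    apply Rle_trans with (sum_list (map (fun i => q0 * ((1 - x i) * prod_list (map x (neighbors n i))) + 2 * q0 * (1 - q)) (seq 0 n))).
    - apply sum_le. intros i Hi. apply in_seq in Hi. assert (Hin : (i < n)%nat) by lia.
      destruct (HT' i Hin) as [HP0 HPn]. cbv zeta in HP0, HPn.
      fold x in HP0, HPn.
      set (P := prod_list (map x (neighbors n i))) in *.
      assert (Pb : 0 <= P <= 1) by (apply prod_bounds; auto).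
      assert (xi := xb i).
      assert (0 <= q0 * ((1 - x i) * P)) by (apply Rmult_le_pos; [lra| apply Rmult_le_pos; lra]).
      assert (0 <= 2 * q0 * (1 - q)) by (apply Rmult_le_pos; lra).
      destruct (Req_dec P 0) as [e|ne].
      + rewrite (HP0 e). simpl. lra.
      + assert (Pp : 0 < P) by lra.
        unfold x in *. rewrite (HPn ne) in *. simpl in *.
        set (t := p' i / P) in *.
        assert (pe : p' i = t * P) by (unfold t; field; auto).
        rewrite pe.
        assert (tp : 0 < t) by (unfold t; apply Rdiv_lt_0_compat; auto).
        destruct (Rlt_le_dec (F t) q) as [h|h].
        * assert (t < q0) by auto.
          assert (t * P * (1 - F t) <= q0 * ((1 - F t) * P)).
          { replace (t * P * (1 - F t)) with (t * ((1 - F t) * P)) by ring.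
            apply Rmult_le_compat_r; [apply Rmult_le_pos|]; lra. }
          lra.
        * assert (K := key F q q0 t Hreg Hq (conj Hq0 Hmin) h).
          assert (0 <= t * (1 - F t)) by (apply Rmult_le_pos; lra).
          assert (t * P * (1 - F t) <= t * (1 - F t)).
          { replace (t * P * (1 - F t)) with (P * (t * (1 - F t))) by ring.
            replace (t * (1 - F t)) with (1 * (t * (1 - F t))) at 2 by ring.
            apply Rmult_le_compat_r; lra. }
          lra.
    - rewrite sum_lin, length_seq.
      assert (FL := f_lemma x (seq 0 n) (seq_NoDup n 0) xb).
      assert (0 <= prod_list (map x (seq 0 n))) by (apply prod_bounds; auto).
      unfold neighbors.
      assert (2 * q0 * (1 - q) * INR n = 2 * q0) by (replace (2 * q0 * (1 - q) * INR n) with (2 * q0 * (INR n * (1 - q))) by ring; rewrite Hnq; ring).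
      nra. }
  set (x := fun j => Fe F (T j)).
  assert (xb : forall j, 0 <= x j <= 1) by (intro j; apply Fe_bounds; auto).
  set (S := sum_list (map (fun i => 1 - x i) (seq 0 n))).
  assert (Sn : forall j, 0 <= 1 - x j) by (intro j; destruct (xb j); lra).
  assert (Hm : INR (n - 1) = INR n - 1) by (rewrite minus_INR by lia; simpl; ring).
  assert (pow_up : q ^ (n - 1) < 2/3).
  { assert (h1 := pow_le_exp (- (1 / INR n)) (n - 1) ltac:(assert (1/INR n <= 1/2) by (apply Rmult_le_reg_r with (INR n); [lra|]; field_simplify; lra); lra)).
    replace (1 + - (1 / INR n)) with q in h1 by (unfold q; ring).
    rewrite Hm in h1.
    assert (h2 : (INR n - 1) * - (1 / INR n) <= - (1/2)).
    { replace ((INR n - 1) * - (1 / INR n)) with (-1 + 1 / INR n) by (field; lra).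
      assert (1/INR n <= 1/2) by (apply Rmult_le_reg_r with (INR n); [lra|]; field_simplify; lra). lra. }
    assert (h3 : exp ((INR n - 1) * - (1 / INR n)) <= exp (- (1/2))).
    { destruct (Rle_lt_or_eq_dec _ _ h2) as [h|h]; [left; apply exp_increasing; auto| rewrite h; lra]. }
    rewrite exp_Ropp in h3.
    assert (h4 : 1 + 1/2 < exp (1/2)) by (apply exp_ineq1; lra).
    assert (h5 : / exp (1/2) < 2/3).
    { apply Rmult_lt_reg_r with (exp (1/2)); [lra|]. rewrite Rinv_l by lra. lra. }
    lra. }
  assert (pow_lo : 1/3 <= q ^ (n - 1)).
  { set (m := INR (n - 1)) in *.
    assert (m1 : 1 <= m) by lra.
    assert (h1 := pow_le_exp (1 / m) (n - 1) ltac:(assert (0 < 1/m) by (apply Rdiv_lt_0_compat; lra); lra)).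
    fold m in h1. replace (m * (1/m)) with 1 in h1 by (field; lra).
    assert (e : q * (1 + 1/m) = 1) by (unfold q; rewrite Hm; field; lra).
    assert (e2 : q ^ (n - 1) * (1 + 1/m) ^ (n - 1) = 1) by (rewrite <- Rpow_mult_distr, e; apply pow1).
    assert (A0 : 0 < (1 + 1/m) ^ (n - 1)) by (apply pow_lt; assert (0 < 1/m) by (apply Rdiv_lt_0_compat; lra); lra).
    assert (h3 := exp_le_3).
    nra. }
  assert (S3 : 1/3 <= S).
  { destruct (classic (exists j, (j < n)%nat /\ x j = 0)) as [[j [Hj e]]|Hno].
    - assert (1 - x j <= S) by (apply (sum_ge_elem (fun i => 1 - x i)); auto; apply in_seq; lia). lra.
    - assert (xp : forall j, (j < n)%nat -> 0 < x j).
      { intros j Hj. destruct (xb j) as [h _]. destruct (Rle_lt_or_eq_dec _ _ h); auto.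
        exfalso. apply Hno. exists j. auto. }
      destruct (classic (forall i, (i < n)%nat -> x i <= q)) as [Hall|Hex].
      + assert (sum_list (map (fun _ => 1 - q) (seq 0 n)) <= S).
        { apply sum_le. intros i Hi. apply in_seq in Hi. assert (x i <= q) by (apply Hall; lia). lra. }
        rewrite sum_const, length_seq in H. lra.
      + apply not_all_ex_not in Hex. destruct Hex as [i Hi].
        apply imply_to_and in Hi. destruct Hi as [Hin Hxi]. apply Rnot_le_lt in Hxi.
        destruct (HT i Hin) as [HP0 HPn]. cbv zeta in HP0, HPn. fold x in HP0, HPn.
        set (P := prod_list (map x (neighbors n i))) in *.
        assert (Pp : 0 < P).
        { apply prod_pos. intros j Hj. unfold neighbors in Hj. apply filter_In in Hj.
          destruct Hj as [Hj _]. apply in_seq in Hj. apply xp; lia. }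
        assert (Tv := HPn ltac:(lra)).
        assert (Fx : x i = F (p / P)) by (unfold x; rewrite Tv; reflexivity).
        assert (big : q0 < p / P).
        { destruct (Rlt_le_dec q0 (p / P)) as [h|h]; auto.
          assert (F (p/P) <= F q0) by (apply Hmono; auto). lra. }
        assert (Psmall : P < q ^ (n - 1)).
        { apply Rmult_lt_reg_r with (q0 / P). apply Rdiv_lt_0_compat; lra.
          replace (P * (q0 / P)) with q0 by (field; lra).
          replace (q ^ (n - 1) * (q0 / P)) with (p / P) by (unfold p; field; lra). lra. }
        assert (PS : 1 - S <= P).
        { apply Rle_trans with (1 - sum_list (map (fun i => 1 - x i) (neighbors n i))).
          - unfold S, neighbors. assert (h := sum_filter_le (fun i => 1 - x i) (fun j => negb (Nat.eqb j i)) (seq 0 n) Sn). lra.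
          - apply prod_ge; auto. }
        lra. }
  assert (pp : q0 / 3 <= p) by (unfold p; nra).
  assert (REV : revenue F n (fun _ => p) T = p * S).
  { unfold revenue, S. rewrite <- sum_scal. reflexivity. }
  rewrite REV. nra.
Qed.
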